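(* Consider the three-dimensional stochastic Maxwell equations with multiplicative noise written in the stochastic Hamiltonian form $$\mathbf{K}\,{\rm d}_{t}\mathcal{E}+\mathbf{L}_{1}\mathcal{E}_{x}{\rm d}t+\mathbf{L}_{2}\mathcal{E}_{y}{\rm d}t+\mathbf{L}_{3}\mathcal{E}_{z}{\rm d}t=\nabla S(\mathcal{E})\circ{\rm d}W(t),$$ and the stochastic Runge-Kutta method described in the context, with temporal coefficients $(a_{kj},b_k)_{k,j=1}^r$ and spatial coefficients $(\widetilde{a}_{mn},\widetilde{b}_m)_{m,n=1}^s$ in $x$, $(\overline{a}_{pq},\overline{b}_p)_{p,q=1}^\iota$ in $y$, $(\widehat{a}_{lv},\widehat{b}_l)_{l,v=1}^\sigma$ in $z$. Assume $$b_kb_j-b_ka_{kj}-b_ja_{jk}=0,\quad \overline{b}_p\overline{b}_q-\overline{b}_p\overline{a}_{pq}-\overline{b}_q\overline a_{qp}=0,$$ $$\widetilde{b}_m\widetilde{b}_n-\widetilde{b}_m\widetilde{a}_{mn}-\widetilde{b}_n\widetilde{a}_{nm}=0,\quad \widehat{b}_l\widehat{b}_v-\widehat{b}_l\widehat{a}_{lv}-\widehat{b}_v\widehat{a}_{vl}=0$$ for all $k,j=1,\dots,r$, $m,n=1,\dots,s$, $p,q=1,\dots,\iota$, $l,v=1,\dots,\sigma$. Then the method satisfies, almost surely, the discrete stochastic multi-symplectic conservation law $$\frac{\omega^{\rho+1}-\omega^{\rho}}{\tau}+\frac{\kappa_{i_1+1}^{(1)}-\kappa_{i_1}^{(1)}}{\Delta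 x}+\frac{\kappa_{i_2+1}^{(2)}-\kappa_{i_2}^{(2)}}{\Delta y}+\frac{\kappa_{i_3+1}^{(3)}-\kappa_{i_3}^{(3)}}{\Delta z}=0,$$ where $\omega^\rho=\frac{1}{2}\sum_{m=1}^{s}\sum_{p=1}^{\iota}\sum_{l=1}^{\sigma}\widetilde{b}_m\overline{b}_p\widehat{b}_l\,{\rm d}\mathcal{E}_{mpl}^{\rho}\wedge \mathbf{K}{\rm d}\mathcal{E}_{mpl}^{\rho}$, $\kappa_{i_1}^{(1)}=\frac{1}{2}\sum_{k=1}^{r}\sum_{p=1}^{\iota}\sum_{l=1}^{\sigma}b_k\overline{b}_p\widehat{b}_l\,{\rm d}\mathcal{E}_{i_1 pl}^{k}\wedge \mathbf{L}_1{\rm d}\mathcal{E}_{i_1 pl}^{k}$, $\kappa_{i_2}^{(2)}=\frac{1}{2}\sum_{k=1}^{r}\sum_{m=1}^{s}\sum_{l=1}^{\sigma}b_k\widetilde{b}_m\widehat{b}_l\,{\rm d}\mathcal{E}_{mi_2 l}^{k}\wedge \mathbf{L}_2{\rm d}\mathcal{E}_{mi_2 l}^{k}$, $\kappa_{i_3}^{(3)}=\frac{1}{2}\sum_{k=1}^{r}\sum_{m=1}^{s}\sum_{p=1}^{\iota}b_k\widetilde{b}_m\overline{b}_p\,{\rm d}\mathcal{E}_{mpi_3}^{k}\wedge \mathbf{L}_3{\rm d}\mathcal{E}_{mpi_3}^{k}$.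
   Context: $\mathcal{E}=(H^T,E^T)^T\in\mathbb{R}^6$ with $H=(H_1,H_2,H_3)$, $E=(E_1,E_2,E_3)$; $S(\mathcal{E})=\frac{\lambda}{2}(|E_1|^2+|E_2|^2+|E_3|^2+|H_1|^2+|H_2|^2+|H_3|^2)$ for a real constant $\lambda$; $\mathbf{K}=\begin{pmatrix}0&-I_3\\ I_3&0\end{pmatrix}$, $\mathbf{L}_i=\begin{pmatrix}\mathcal{D}_i&0\\0&\mathcal{D}_i\end{pmatrix}$ with $\mathcal{D}_1=\begin{pmatrix}0&0&0\\0&0&-1\\0&1&0\end{pmatrix}$, $\mathcal{D}_2=\begin{pmatrix}0&0&1\\0&0&0\\-1&0&0\end{pmatrix}$, $\mathcal{D}_3=\begin{pmatrix}0&-1&0\\1&0&0\\0&0&0\end{pmatrix}$. $W$ is a $Q$-Wiener process and the equation is in the Stratonovich sense. The method, with time step $\tau$ and space steps $\Delta x,\Delta y,\Delta z$, has on each space-time cell stage values $\Upsilon_{mplk}\in\mathbb{R}^6$, discrete derivatives $\delta_t\Upsilon_{mplk},\delta_x\Upsilon_{mplk},\delta_y\Upsilon_{mplk},\delta_z\Upsilon_{mplk}$, time-level values $\mathcal{E}^\rho_{mpl},\mathcal{E}^{\rho+1}_{mpl}$, and face values $\mathcal{E}^k_{i_1pl},\mathcal{E}^k_{(i_1+1)pl}$, $\mathcal{E}^k_{mi_2l},\mathcal{E}^k_{m(i_2+1)l}$, $\mathcal{E}^k_{mpi_3},\mathcal{E}^k_{mp(i_3+1)}$, related by $\Upsilon_{mplk}=\mathcal{E}_{mpl}^{\rho}+\tau\sum_{j}a_{kj}\delta_t\Upsilon_{mplj}$,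 $\mathcal{E}_{mpl}^{\rho+1}=\mathcal{E}_{mpl}^{\rho}+\tau\sum_{k}b_{k}\delta_t\Upsilon_{mplk}$, $\Upsilon_{mplk}=\mathcal{E}_{i_1pl}^{k}+\Delta x\sum_{n}\widetilde{a}_{mn}\delta_{x}\Upsilon_{nplk}$, $\mathcal{E}_{(i_1+1)pl}^{k}=\mathcal{E}_{i_1pl}^{k}+\Delta x\sum_{m}\widetilde{b}_{m}\delta_{x}\Upsilon_{mplk}$, $\Upsilon_{mplk}=\mathcal{E}_{mi_2l}^{k}+\Delta y\sum_{q}\overline{a}_{pq}\delta_{y}\Upsilon_{mqlk}$, $\mathcal{E}_{m(i_{2}+1)l}^{k}=\mathcal{E}_{mi_2l}^{k}+\Delta y\sum_{p}\overline{b}_{p}\delta_{y}\Upsilon_{mplk}$, $\Upsilon_{mplk}=\mathcal{E}_{mpi_3}^{k}+\Delta z\sum_{v}\widehat{a}_{lv}\delta_{z}\Upsilon_{mpvk}$, $\mathcal{E}_{mp(i_3+1)}^{k}=\mathcal{E}_{mpi_3}^{k}+\Delta z\sum_{u}\widehat{b}_{u}\delta_{z}\Upsilon_{mpuk}$, $\tau\mathbf{K}\delta_{t}\Upsilon_{mplk}+\tau\sum_{i=1}^3\mathbf{L}_{i}\delta_{x_i}\Upsilon_{mplk}=\nabla S(\Upsilon_{mplk})\Delta W$, where $(\delta_{x_1},\delta_{x_2},\delta_{x_3})=(\delta_x,\delta_y,\delta_z)$ and $\Delta W$ is the real-valued Wiener increment over the time step at the corresponding stage point. ${\rm d}$ is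 the exterior differential in phase space and ${\rm d}\mathcal{E}\wedge\mathbf{M}{\rm d}\mathcal{E}=\sum_{a,b}\mathbf{M}_{ab}{\rm d}\mathcal{E}_a\wedge{\rm d}\mathcal{E}_b$. *)

(* Defs.v *)
From HB Require Import structures.
From mathcomp Require Import all_boot all_order all_algebra.
From mathcomp Require Import all_classical all_reals all_analysis.
Set Implicit Arguments. Unset Strict Implicit. Unset Printing Implicit Defensive.
Import Order.TTheory GRing.Theory Num.Theory.
Import numFieldNormedType.Exports.
Local Open Scope ring_scope.

Definition D1 {R : nzRingType} : 'M[R]_3 :=
  \matrix_(i < 3, j < 3)
    (if ((i : nat) == 1%N) && ((j : nat) == 2%N) then -1
     else if ((i : nat) == 2%N) && ((j : nat) == 1%N) then 1 else 0).
Definition D2 {R : nzRingType} : 'M[R]_3 :=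
  \matrix_(i < 3, j < 3)
    (if ((i : nat) == 0%N) && ((j : nat) == 2%N) then 1
     else if ((i : nat) == 2%N) && ((j : nat) == 0%N) then -1 else 0).
Definition D3 {R : nzRingType} : 'M[R]_3 :=
  \matrix_(i < 3, j < 3)
    (if ((i : nat) == 0%N) && ((j : nat) == 1%N) then -1
     else if ((i : nat) == 1%N) && ((j : nat) == 0%N) then 1 else 0).

Definition Kmx {R : nzRingType} : 'M[R]_6 := @block_mx R 3 3 3 3 0 (- 1%:M) 1%:M 0.
Definition L1mx {R : nzRingType} : 'M[R]_6 := @block_mx R 3 3 3 3 D1 0 0 D1.
Definition L2mx {R : nzRingType} : 'M[R]_6 := @block_mx R 3 3 3 3 D2 0 0 D2.
Definition L3mx {R : nzRingType} : 'M[R]_6 := @block_mx R 3 3 3 3 D3 0 0 D3.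

Definition Sham {R : fieldType} (lam : R) (e : 'I_6 -> R) : R :=
  lam / 2%:R * \sum_(c < 6) e c ^+ 2.
Definition gradS {R : nzRingType} (lam : R) (e : 'I_6 -> R) : 'I_6 -> R :=
  fun c => lam * e c.

(* Exterior calculus on the phase space V: a state E (6 component
   functions on V) has differential dE_a = 'd (E a).  The 2-form
   dE /\ M dE = sum_{a,b} M_ab dE_a /\ dE_b, evaluated at the point th
   on the tangent vectors xi, eta, with
   (dA /\ dB)(xi, eta) = dA(xi) dB(eta) - dA(eta) dB(xi). *)
Definition wedgeM {R : realType} {V : normedModType R}
  (M : 'M[R]_6) (F : 'I_6 -> V -> R) (th xi eta : V) : R :=
  \sum_(a < 6) \sum_(b < 6)
     M a b * ('d (F a) th xi * 'd (F b) th eta - 'd (F a) th eta * 'd (F b) th xi).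

(* Main.v *)
Require Import Defs.
From HB Require Import structures.
From mathcomp Require Import all_boot all_order all_algebra.
From mathcomp Require Import all_classical all_reals all_analysis.
From mathcomp Require Import ring.
From Stdlib Require Import FunctionalExtensionality.
Import Order.TTheory GRing.Theory Num.Theory.
Import numFieldNormedType.Exports.
Local Open Scope ring_scope.

Module Helpers.
Set Implicit Arguments. Unset Strict Implicit. Unset Printing Implicit Defensive.
Section Alg.
Variable R : fieldType.

Definition Bf (M : 'M[R]_6) (U W : bool -> 'I_6 -> R) : R :=
  \sum_(a < 6) \sum_(b < 6) M a b * (U true a * W false b - U false a * W true b).

Lemma Bf_addl M (U1 U2 W : bool -> 'I_6 -> R) :
  Bf M (fun z c => U1 z c + U2 z c) W = Bf M U1 W + Bf M U2 W.
Proof.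
rewrite /Bf -big_split; apply: eq_bigr => a _ /=.
rewrite -big_split; apply: eq_bigr => b _ /=; ring.
Qed.

Lemma Bf_addr M (U W1 W2 : bool -> 'I_6 -> R) :
  Bf M U (fun z c => W1 z c + W2 z c) = Bf M U W1 + Bf M U W2.
Proof.
rewrite /Bf -big_split; apply: eq_bigr => a _ /=.
rewrite -big_split; apply: eq_bigr => b _ /=; ring.
Qed.

Lemma Bf_scl M k (U W : bool -> 'I_6 -> R) :
  Bf M (fun z c => k * U z c) W = k * Bf M U W.
Proof.
rewrite /Bf mulr_sumr; apply: eq_bigr => a _.
rewrite mulr_sumr; apply: eq_bigr => b _; ring.
Qed.

Lemma Bf_scr M k (U W : bool -> 'I_6 -> R) :
  Bf M U (fun z c => k * W z c) = k * Bf M U W.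
Proof.
rewrite /Bf mulr_sumr; apply: eq_bigr => a _.
rewrite mulr_sumr; apply: eq_bigr => b _; ring.
Qed.

Lemma Bf_sml n M (U : 'I_n -> bool -> 'I_6 -> R) W :
  Bf M (fun z c => \sum_(j < n) U j z c) W = \sum_(j < n) Bf M (U j) W.
Proof.
rewrite /Bf [RHS]exchange_big /=; apply: eq_bigr => a _.
rewrite [RHS]exchange_big /=; apply: eq_bigr => b _.
rewrite !mulr_suml -sumrB mulr_sumr; apply: eq_bigr => j _; ring.
Qed.

Lemma Bf_smr n M (U : 'I_n -> bool -> 'I_6 -> R) W :
  Bf M W (fun z c => \sum_(j < n) U j z c) = \sum_(j < n) Bf M W (U j).
Proof.
rewrite /Bf [RHS]exchange_big /=; apply: eq_bigr => a _.
rewrite [RHS]exchange_big /=; apply: eq_bigr => b _.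
rewrite !mulr_sumr -sumrB mulr_sumr; apply: eq_bigr => j _; ring.
Qed.

Lemma Bf_suml n M h (w : 'I_n -> R) (U : 'I_n -> bool -> 'I_6 -> R) W :
  Bf M (fun z c => h * \sum_(j < n) w j * U j z c) W
  = h * \sum_(j < n) w j * Bf M (U j) W.
Proof.
rewrite Bf_scl (Bf_sml M (fun j z c => w j * U j z c)); congr (_ * _).
by apply: eq_bigr => j _; rewrite Bf_scl.
Qed.

Lemma Bf_sumr n M h (w : 'I_n -> R) (U : 'I_n -> bool -> 'I_6 -> R) W :
  Bf M W (fun z c => h * \sum_(j < n) w j * U j z c)
  = h * \sum_(j < n) w j * Bf M W (U j).
Proof.
rewrite Bf_scr (Bf_smr M (fun j z c => w j * U j z c)); congr (_ * _).
by apply: eq_bigr => j _; rewrite Bf_scr.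
Qed.

Lemma alg1 n (a : 'I_n -> 'I_n -> R) (b : 'I_n -> R) h X (P Q : 'I_n -> R)
  (B : 'I_n -> 'I_n -> R) :
  (forall k j, b k * b j - b k * a k j - b j * a j k = 0) ->
  X + h * (\sum_(k < n) b k * P k) + (h * (\sum_(k < n) b k * Q k)
     + h * \sum_(k < n) b k * (h * \sum_(j < n) b j * B k j)) - X
  = h * \sum_(k < n) b k * (P k + h * (\sum_(j < n) a k j * B j k)
                           + (Q k + h * \sum_(j < n) a k j * B k j)).
Proof.
move=> cond.
have key : \sum_(k < n) \sum_(j < n) b k * b j * B k j =
  \sum_(k < n) \sum_(j < n) b k * a k j * B j k +
  \sum_(k < n) \sum_(j < n) b k * a k j * B k j.
  rewrite [X in X + _]exchange_big /= -big_split; apply: eq_bigr => k _ /=.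
  rewrite -big_split; apply: eq_bigr => j _ /=.
  have H := cond k j.
  transitivity ((b k * b j - (b k * b j - b k * a k j - b j * a j k)) * B k j).
    by rewrite H subr0.
  ring.
have e1 : \sum_(k < n) b k * (h * \sum_(j < n) b j * B k j) =
   h * \sum_(k < n) \sum_(j < n) b k * b j * B k j.
  rewrite mulr_sumr; apply: eq_bigr => k _; rewrite !mulr_sumr; apply: eq_bigr => j _; ring.
have e2 : \sum_(k < n) b k * (P k + h * (\sum_(j < n) a k j * B j k)
                           + (Q k + h * \sum_(j < n) a k j * B k j)) =
  \sum_(k < n) b k * P k + \sum_(k < n) b k * Q k +
  h * \sum_(k < n) \sum_(j < n) b k * a k j * B j k +
  h * \sum_(k < n) \sum_(j < n) b k * a k j * B k j.
  rewrite !mulr_sumr -!big_split; apply: eq_bigr => k _ /=.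
  rewrite !mulr_sumr !mulrDr !mulr_sumr.
  rewrite (_ : \sum_(i < n) b k * (h * (a k i * B i k)) = \sum_(i < n) h * (b k * a k i * B i k)); last by apply: eq_bigr => i _; ring.
  rewrite (_ : \sum_(i < n) b k * (h * (a k i * B k i)) = \sum_(i < n) h * (b k * a k i * B k i)); last by apply: eq_bigr => i _; ring.
  ring.
rewrite e1 e2 key; ring.
Qed.

Lemma sympl1 n (a : 'I_n -> 'I_n -> R) (b : 'I_n -> R) M h
  (E0 E1 : bool -> 'I_6 -> R) (Yk Dk : 'I_n -> bool -> 'I_6 -> R) :
  (forall k j, b k * b j - b k * a k j - b j * a j k = 0) ->
  (forall z k c, Yk k z c = E0 z c + h * \sum_(j < n) a k j * Dk j z c) ->
  (forall z c, E1 z c = E0 z c + h * \sum_(k < n) b k * Dk k z c) ->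
  Bf M E1 E1 - Bf M E0 E0 =
  h * \sum_(k < n) b k * (Bf M (Yk k) (Dk k) + Bf M (Dk k) (Yk k)).
Proof.
move=> cond hY hE.
have -> : E1 = fun z c => E0 z c + h * \sum_(k < n) b k * Dk k z c.
  by apply: functional_extensionality => z; apply: functional_extensionality => c; apply: hE.
have -> : Yk = fun k z c => E0 z c + h * \sum_(j < n) a k j * Dk j z c.
  by apply: functional_extensionality => k; apply: functional_extensionality => z; apply: functional_extensionality => c; apply: hY.
rewrite Bf_addl !Bf_addr Bf_sumr !Bf_suml.
have E2 : \sum_(j < n) b j * Bf M (Dk j) (fun z c => h * \sum_(k < n) b k * Dk k z c)
  = \sum_(j < n) b j * (h * \sum_(k < n) b k * Bf M (Dk j) (Dk k)).
  by apply: eq_bigr => j _; rewrite Bf_sumr.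
rewrite E2.
under [in RHS]eq_bigr => k _ do rewrite Bf_addl Bf_addr Bf_suml Bf_sumr.
exact: alg1.
Qed.
Definition skew (M : 'M[R]_6) := forall i j, M i j = - M j i.
Definition SS M Y D := Bf M Y D + Bf M D Y.

Lemma skewS M Y D : skew M -> SS M Y D =
  2%:R * (\sum_(a < 6) Y true a * (\sum_(b < 6) M a b * D false b)
        - \sum_(a < 6) Y false a * (\sum_(b < 6) M a b * D true b)).
Proof.
move=> sk; rewrite /SS /Bf [X in _ + X]exchange_big /= -big_split.
rewrite -sumrB mulr_sumr; apply: eq_bigr => a _ /=.
rewrite -big_split /= !mulr_sumr -sumrB mulr_sumr; apply: eq_bigr => b _ /=.
rewrite (sk b a); ring.
Qed.

Lemma point (M0 M1 M2 M3 : 'M[R]_6) tau lam w (Y Dt Dx Dy Dz : bool -> 'I_6 -> R) :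
  skew M0 -> skew M1 -> skew M2 -> skew M3 -> tau != 0 ->
  (forall z c, tau * (\sum_(d < 6) M0 c d * Dt z d)
     + tau * (\sum_(d < 6) (M1 c d * Dx z d + M2 c d * Dy z d + M3 c d * Dz z d))
     = lam * Y z c * w) ->
  SS M0 Y Dt + SS M1 Y Dx + SS M2 Y Dy + SS M3 Y Dz = 0.
Proof.
move=> s0 s1 s2 s3 tnz hE.
rewrite !skewS //.
pose T z := \sum_(a < 6) Y (~~ z) a * (\sum_(d < 6) M0 a d * Dt z d
     + \sum_(d < 6) (M1 a d * Dx z d + M2 a d * Dy z d + M3 a d * Dz z d)).
have ET : forall z,
  \sum_(a < 6) Y (~~z) a * (\sum_(b < 6) M0 a b * Dt z b)
  + \sum_(a < 6) Y (~~z) a * (\sum_(b < 6) M1 a b * Dx z b)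
  + \sum_(a < 6) Y (~~z) a * (\sum_(b < 6) M2 a b * Dy z b)
  + \sum_(a < 6) Y (~~z) a * (\sum_(b < 6) M3 a b * Dz z b) = T z.
  move=> z; rewrite /T -!big_split; apply: eq_bigr => a _ /=.
  rewrite !big_split /=; ring.
have ET' : forall z, tau * T z = \sum_(a < 6) Y (~~z) a * (lam * Y z a * w).
  move=> z; rewrite /T mulr_sumr; apply: eq_bigr => a _.
  rewrite -hE; ring.
have Ef := ET false; have Et := ET true; simpl in Ef, Et.
apply: (mulfI tnz); rewrite mulr0.
transitivity (2%:R * (tau * T false - tau * T true)).
  by rewrite -Ef -Et; ring.
rewrite !ET' /=.
rewrite (_ : \sum_(a < 6) Y true a * (lam * Y false a * w) =
   \sum_(a < 6) Y false a * (lam * Y true a * w)); first by rewrite subrr mulr0.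
by apply: eq_bigr => a _; ring.
Qed.
Section Reord.
Variables (s io sg r : nat) (f : 'I_s -> 'I_io -> 'I_sg -> 'I_r -> R)
  (u : 'I_s -> R) (v : 'I_io -> R) (t : 'I_sg -> R) (w : 'I_r -> R).
Definition Can := \sum_(m < s) \sum_(p < io) \sum_(l < sg) \sum_(k < r)
   u m * v p * t l * w k * f m p l k.
Lemma nA : \sum_(m < s) \sum_(p < io) \sum_(l < sg) u m * v p * t l * (\sum_(k < r) w k * f m p l k) = Can.
Proof.
apply: eq_bigr => m _; apply: eq_bigr => p _; apply: eq_bigr => l _.
rewrite mulr_sumr; apply: eq_bigr => k _; ring.
Qed.
Lemma nB : \sum_(k < r) \sum_(p < io) \sum_(l < sg) w k * v p * t l * (\sum_(m < s) u m * f m p l k) = Can.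
Proof.
under eq_bigr => k _ do under eq_bigr => p _ do under eq_bigr => l _ do rewrite mulr_sumr.
under eq_bigr => k _ do under eq_bigr => p _ do rewrite exchange_big.
under eq_bigr => k _ do rewrite exchange_big.
rewrite exchange_big; apply: eq_bigr => m _.
rewrite exchange_big; apply: eq_bigr => p _.
rewrite exchange_big; apply: eq_bigr => l _.
apply: eq_bigr => k _; ring.
Qed.
Lemma nC : \sum_(k < r) \sum_(m < s) \sum_(l < sg) w k * u m * t l * (\sum_(p < io) v p * f m p l k) = Can.
Proof.
under eq_bigr => k _ do under eq_bigr => m _ do under eq_bigr => l _ do rewrite mulr_sumr.
rewrite exchange_big; apply: eq_bigr => m _.
under eq_bigr => k _ do rewrite exchange_big.
rewrite exchange_big; apply: eq_bigr => p _.
rewrite exchange_big; apply: eq_bigr => l _.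
apply: eq_bigr => k _; ring.
Qed.
Lemma nD : \sum_(k < r) \sum_(m < s) \sum_(p < io) w k * u m * v p * (\sum_(l < sg) t l * f m p l k) = Can.
Proof.
under eq_bigr => k _ do under eq_bigr => m _ do under eq_bigr => p _ do rewrite mulr_sumr.
rewrite exchange_big; apply: eq_bigr => m _.
rewrite exchange_big; apply: eq_bigr => p _.
rewrite exchange_big; apply: eq_bigr => l _.
apply: eq_bigr => k _; ring.
Qed.
End Reord.

Lemma sum4 s io sg r (f1 f2 f3 f4 : 'I_s -> 'I_io -> 'I_sg -> 'I_r -> R) :
  (forall m p l k, f1 m p l k + f2 m p l k + f3 m p l k + f4 m p l k = 0) ->
  \sum_(m < s) \sum_(p < io) \sum_(l < sg) \sum_(k < r) f1 m p l k
  + \sum_(m < s) \sum_(p < io) \sum_(l < sg) \sum_(k < r) f2 m p l k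
  + \sum_(m < s) \sum_(p < io) \sum_(l < sg) \sum_(k < r) f3 m p l k
  + \sum_(m < s) \sum_(p < io) \sum_(l < sg) \sum_(k < r) f4 m p l k = 0.
Proof.
move=> H; rewrite -!big_split /=; apply: big1 => m _.
rewrite -!big_split /=; apply: big1 => p _.
rewrite -!big_split /=; apply: big1 => l _.
rewrite -!big_split /=; apply: big1 => k _; exact: H.
Qed.

Lemma diff3 n1 n2 n3 (u : 'I_n1 -> R) (v : 'I_n2 -> R) (t : 'I_n3 -> R)
  (F0 F1 G : 'I_n1 -> 'I_n2 -> 'I_n3 -> R) h :
  h != 0 -> (forall i j k, F1 i j k - F0 i j k = h * G i j k) ->
  (1 / 2%:R * (\sum_(i < n1) \sum_(j < n2) \sum_(k < n3) u i * v j * t k * F1 i j k)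
   - 1 / 2%:R * (\sum_(i < n1) \sum_(j < n2) \sum_(k < n3) u i * v j * t k * F0 i j k)) / h
  = 1 / 2%:R * \sum_(i < n1) \sum_(j < n2) \sum_(k < n3) u i * v j * t k * G i j k.
Proof.
move=> hnz H.
have E : \sum_(i < n1) \sum_(j < n2) \sum_(k < n3) u i * v j * t k * F1 i j k
   - \sum_(i < n1) \sum_(j < n2) \sum_(k < n3) u i * v j * t k * F0 i j k
   = h * \sum_(i < n1) \sum_(j < n2) \sum_(k < n3) u i * v j * t k * G i j k.
  rewrite -sumrB mulr_sumr; apply: eq_bigr => i _.
  rewrite -sumrB mulr_sumr; apply: eq_bigr => j _.
  rewrite -sumrB mulr_sumr; apply: eq_bigr => k _.
  by rewrite -mulrBr H; ring.
by rewrite -mulrBr E mulrCA mulrC mulKf.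
Qed.

Lemma core (M0 M1 M2 M3 : 'M[R]_6) (r s io sg : nat) (lam tau dx dy dz : R)
  (a : 'I_r -> 'I_r -> R) (b : 'I_r -> R)
  (at_ : 'I_s -> 'I_s -> R) (bt : 'I_s -> R)
  (ab : 'I_io -> 'I_io -> R) (bb : 'I_io -> R)
  (ah : 'I_sg -> 'I_sg -> R) (bh : 'I_sg -> R)
  (dW : 'I_s -> 'I_io -> 'I_sg -> R)
  (y yt yx yy yz : bool -> 'I_s -> 'I_io -> 'I_sg -> 'I_r -> 'I_6 -> R)
  (e0 e1 : bool -> 'I_s -> 'I_io -> 'I_sg -> 'I_6 -> R)
  (x0 x1 : bool -> 'I_r -> 'I_io -> 'I_sg -> 'I_6 -> R)
  (w0 w1 : bool -> 'I_r -> 'I_s -> 'I_sg -> 'I_6 -> R)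
  (z0 z1 : bool -> 'I_r -> 'I_s -> 'I_io -> 'I_6 -> R) :
  skew M0 -> skew M1 -> skew M2 -> skew M3 ->
  tau != 0 -> dx != 0 -> dy != 0 -> dz != 0 ->
  (forall k j, b k * b j - b k * a k j - b j * a j k = 0) ->
  (forall p q, bb p * bb q - bb p * ab p q - bb q * ab q p = 0) ->
  (forall m n, bt m * bt n - bt m * at_ m n - bt n * at_ n m = 0) ->
  (forall l v, bh l * bh v - bh l * ah l v - bh v * ah v l = 0) ->
  (forall z m p l k c, y z m p l k c = e0 z m p l c + tau * \sum_(j < r) a k j * yt z m p l j c) ->
  (forall z m p l c, e1 z m p l c = e0 z m p l c + tau * \sum_(k < r) b k * yt z m p l k c) ->
  (forall z m p l k c, y z m p l k c = x0 z k p l c + dx * \sum_(n < s) at_ m n * yx z n p l k c) ->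
  (forall z k p l c, x1 z k p l c = x0 z k p l c + dx * \sum_(m < s) bt m * yx z m p l k c) ->
  (forall z m p l k c, y z m p l k c = w0 z k m l c + dy * \sum_(q < io) ab p q * yy z m q l k c) ->
  (forall z k m l c, w1 z k m l c = w0 z k m l c + dy * \sum_(p < io) bb p * yy z m p l k c) ->
  (forall z m p l k c, y z m p l k c = z0 z k m p c + dz * \sum_(v < sg) ah l v * yz z m p v k c) ->
  (forall z k m p c, z1 z k m p c = z0 z k m p c + dz * \sum_(u < sg) bh u * yz z m p u k c) ->
  (forall z m p l k c,
     tau * (\sum_(d < 6) M0 c d * yt z m p l k d)
     + tau * (\sum_(d < 6) (M1 c d * yx z m p l k d + M2 c d * yy z m p l k d
                            + M3 c d * yz z m p l k d))
     = lam * y z m p l k c * dW m p l) ->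
  (1 / 2%:R * (\sum_(m < s) \sum_(p < io) \sum_(l < sg) bt m * bb p * bh l *
        Bf M0 (fun z c => e1 z m p l c) (fun z c => e1 z m p l c))
   - 1 / 2%:R * (\sum_(m < s) \sum_(p < io) \sum_(l < sg) bt m * bb p * bh l *
        Bf M0 (fun z c => e0 z m p l c) (fun z c => e0 z m p l c))) / tau
  + (1 / 2%:R * (\sum_(k < r) \sum_(p < io) \sum_(l < sg) b k * bb p * bh l *
        Bf M1 (fun z c => x1 z k p l c) (fun z c => x1 z k p l c))
   - 1 / 2%:R * (\sum_(k < r) \sum_(p < io) \sum_(l < sg) b k * bb p * bh l *
        Bf M1 (fun z c => x0 z k p l c) (fun z c => x0 z k p l c))) / dx
  + (1 / 2%:R * (\sum_(k < r) \sum_(m < s) \sum_(l < sg) b k * bt m * bh l *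
        Bf M2 (fun z c => w1 z k m l c) (fun z c => w1 z k m l c))
   - 1 / 2%:R * (\sum_(k < r) \sum_(m < s) \sum_(l < sg) b k * bt m * bh l *
        Bf M2 (fun z c => w0 z k m l c) (fun z c => w0 z k m l c))) / dy
  + (1 / 2%:R * (\sum_(k < r) \sum_(m < s) \sum_(p < io) b k * bt m * bb p *
        Bf M3 (fun z c => z1 z k m p c) (fun z c => z1 z k m p c))
   - 1 / 2%:R * (\sum_(k < r) \sum_(m < s) \sum_(p < io) b k * bt m * bb p *
        Bf M3 (fun z c => z0 z k m p c) (fun z c => z0 z k m p c))) / dz = 0.
Proof.
move=> s0 s1 s2 s3 tnz xnz ynz znz ct cy cx cz hYt hE1 hYx hX1 hYy hW1 hYz hZ1 hEq.
pose Yf m p l k := fun z c => y z m p l k c.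
pose S0 m p l k := Bf M0 (Yf m p l k) (fun z c => yt z m p l k c)
                 + Bf M0 (fun z c => yt z m p l k c) (Yf m p l k).
pose S1 m p l k := Bf M1 (Yf m p l k) (fun z c => yx z m p l k c)
                 + Bf M1 (fun z c => yx z m p l k c) (Yf m p l k).
pose S2 m p l k := Bf M2 (Yf m p l k) (fun z c => yy z m p l k c)
                 + Bf M2 (fun z c => yy z m p l k c) (Yf m p l k).
pose S3 m p l k := Bf M3 (Yf m p l k) (fun z c => yz z m p l k c)
                 + Bf M3 (fun z c => yz z m p l k c) (Yf m p l k).
rewrite (@diff3 _ _ _ _ _ _ _ _ (fun m p l => \sum_(k < r) b k * S0 m p l k)) //; last first.
  move=> m p l /=. exact: (@sympl1 r a b M0 tau (fun z c => e0 z m p l c) (fun z c => e1 z m p l c) (fun k z c => y z m p l k c) (fun k z c => yt z m p l k c) ct (fun z k c => hYt z m p l k c) (fun z c => hE1 z m p l c)).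
rewrite (@diff3 _ _ _ _ _ _ _ _ (fun k p l => \sum_(m < s) bt m * S1 m p l k)) //; last first.
  move=> k p l /=. exact: (@sympl1 s at_ bt M1 dx (fun z c => x0 z k p l c) (fun z c => x1 z k p l c) (fun m z c => y z m p l k c) (fun m z c => yx z m p l k c) cx (fun z m c => hYx z m p l k c) (fun z c => hX1 z k p l c)).
rewrite (@diff3 _ _ _ _ _ _ _ _ (fun k m l => \sum_(p < io) bb p * S2 m p l k)) //; last first.
  move=> k m l /=. exact: (@sympl1 io ab bb M2 dy (fun z c => w0 z k m l c) (fun z c => w1 z k m l c) (fun p z c => y z m p l k c) (fun p z c => yy z m p l k c) cy (fun z p c => hYy z m p l k c) (fun z c => hW1 z k m l c)).
rewrite (@diff3 _ _ _ _ _ _ _ _ (fun k m p => \sum_(l < sg) bh l * S3 m p l k)) //; last first.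
  move=> k m p /=. exact: (@sympl1 sg ah bh M3 dz (fun z c => z0 z k m p c) (fun z c => z1 z k m p c) (fun l z c => y z m p l k c) (fun l z c => yz z m p l k c) cz (fun z l c => hYz z m p l k c) (fun z c => hZ1 z k m p c)).
rewrite nA nB nC nD /Can -!mulrDr sum4 ?mulr0 // => m p l k.
have P := point s0 s1 s2 s3 tnz (fun z c => hEq z m p l k c).
transitivity (bt m * bb p * bh l * b k * (S0 m p l k + S1 m p l k + S2 m p l k + S3 m p l k)).
  ring.
by rewrite /S0 /S1 /S2 /S3 /SS in P *; rewrite P mulr0.
Qed.
Lemma skewT (M : 'M[R]_6) : M^T = - M -> skew M.
Proof. by move=> H i j; move: (congr1 (fun A : 'M[R]_6 => A j i) H); rewrite !mxE. Qed.
Lemma D1T : (D1 : 'M[R]_3)^T = - D1.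
Proof.
apply/matrixP => i j; rewrite !mxE.
by case: i => [[|[|[|?]]] ?] //; case: j => [[|[|[|?]]] ?] //=; rewrite ?oppr0 ?opprK.
Qed.
Lemma D2T : (D2 : 'M[R]_3)^T = - D2.
Proof.
apply/matrixP => i j; rewrite !mxE.
by case: i => [[|[|[|?]]] ?] //; case: j => [[|[|[|?]]] ?] //=; rewrite ?oppr0 ?opprK.
Qed.
Lemma D3T : (D3 : 'M[R]_3)^T = - D3.
Proof.
apply/matrixP => i j; rewrite !mxE.
by case: i => [[|[|[|?]]] ?] //; case: j => [[|[|[|?]]] ?] //=; rewrite ?oppr0 ?opprK.
Qed.
Lemma skewK : skew Kmx.
Proof. apply: skewT; rewrite /Kmx (@tr_block_mx R 3 3 3 3) !trmx0 trmx1 linearN /= trmx1 (@opp_block_mx R 3 3 3 3) !oppr0 opprK //. Qed.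
Lemma skewL1 : skew L1mx.
Proof. apply: skewT; rewrite /L1mx (@tr_block_mx R 3 3 3 3) !trmx0 D1T (@opp_block_mx R 3 3 3 3) !oppr0 //. Qed.
Lemma skewL2 : skew L2mx.
Proof. apply: skewT; rewrite /L2mx (@tr_block_mx R 3 3 3 3) !trmx0 D2T (@opp_block_mx R 3 3 3 3) !oppr0 //. Qed.
Lemma skewL3 : skew L3mx.
Proof. apply: skewT; rewrite /L3mx (@tr_block_mx R 3 3 3 3) !trmx0 D3T (@opp_block_mx R 3 3 3 3) !oppr0 //. Qed.
End Alg.

Section Diff.
Variables (R : realType) (V : normedModType R).

Definition Dv (f : V -> R) th (df : V -> R) :=
  differentiable f th /\ forall v, 'd f th v = df v.

Lemma Dv_base (f : V -> R) th : differentiable f th -> Dv f th (fun v => 'd f th v).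
Proof. by move=> d; split. Qed.

Lemma Dv_ext (f g : V -> R) th dg : (forall t, f t = g t) -> Dv g th dg -> Dv f th dg.
Proof. by move=> e; have -> : f = g := functional_extensionality _ _ e. Qed.

Lemma Dv_add (f g : V -> R) th df dg : Dv f th df -> Dv g th dg ->
  Dv (fun t => f t + g t) th (fun v => df v + dg v).
Proof.
move=> [d1 h1] [d2 h2].
have hD := diffD d1 d2.
split; first exact: differentiableD d1 d2.
move=> v; exact: (etrans (congr1 (fun L => L v) hD) (f_equal2 +%R (h1 v) (h2 v))).
Qed.

Lemma Dv_scal (f : V -> R) th df (c : R) : Dv f th df ->
  Dv (fun t => c * f t) th (fun v => c * df v).
Proof.
move=> [d1 h1].
have hZ := diffZ c d1.
have dZ := differentiableZ c d1.
have E : (fun t => c * f t) = c *: f by [].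
rewrite E; split; first exact: dZ.
move=> v; exact: (etrans (congr1 (fun L => L v) hZ) (congr1 (fun x => c * x) (h1 v))).
Qed.

Lemma Dv_scar (f : V -> R) th df (c : R) : Dv f th df ->
  Dv (fun t => f t * c) th (fun v => df v * c).
Proof.
move=> H; apply: (@Dv_ext _ (fun t => c * f t)); first by move=> t; rewrite mulrC.
have [d1 h1] := Dv_scal c H; split => // v; rewrite h1; exact: mulrC.
Qed.

Lemma Dv_0 th : Dv (fun _ : V => (0 : R)) th (fun _ => 0).
Proof.
split; first exact: differentiable_cst.
move=> v; exact: (congr1 (fun L => L v) (diff_cst (V:=V) (W:=R) 0 th)).
Qed.

Lemma Dv_sum (I : Type) (s : seq I) (h : I -> V -> R) dh th :
  (forall i, Dv (h i) th (dh i)) ->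
  Dv (fun t => \sum_(i <- s) h i t) th (fun v => \sum_(i <- s) dh i v).
Proof.
move=> H; elim: s => [|i s IH].
  apply: Dv_ext; first by move=> t; rewrite big_nil.
  have [d0 h0] := Dv_0 th; split => // v; rewrite h0 big_nil //.
apply: Dv_ext; first by move=> t; rewrite big_cons.
have [d1 h1] := Dv_add (H i) IH; split => // v; rewrite h1 big_cons //.
Qed.
End Diff.
End Helpers.
Import Helpers.

Theorem mainTheorem2
  (R : realType) (V : normedModType R)  (* V = phase space of the exterior differential d *)
  (r s iota sigma : nat) (lam tau dx dy dz : R)
  (a : 'I_r -> 'I_r -> R) (b : 'I_r -> R)
  (at_ : 'I_s -> 'I_s -> R) (bt : 'I_s -> R)
  (ab : 'I_iota -> 'I_iota -> R) (bb : 'I_iota -> R)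
  (ah : 'I_sigma -> 'I_sigma -> R) (bh : 'I_sigma -> R)
  (* one realization of the Wiener increments at the spatial stage points *)
  (dW : 'I_s -> 'I_iota -> 'I_sigma -> R)
  (* stage values Upsilon_{mplk} and their discrete derivatives *)
  (Y dtY dxY dyY dzY : 'I_s -> 'I_iota -> 'I_sigma -> 'I_r -> 'I_6 -> V -> R)
  (* time-level values E^rho_{mpl}, E^{rho+1}_{mpl} *)
  (E0 E1 : 'I_s -> 'I_iota -> 'I_sigma -> 'I_6 -> V -> R)
  (* face values E^k_{i1 p l}, E^k_{(i1+1) p l} *)
  (X0 X1 : 'I_r -> 'I_iota -> 'I_sigma -> 'I_6 -> V -> R)
  (* face values E^k_{m i2 l}, E^k_{m (i2+1) l} *)
  (W0 W1 : 'I_r -> 'I_s -> 'I_sigma -> 'I_6 -> V -> R)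
  (* face values E^k_{m p i3}, E^k_{m p (i3+1)} *)
  (Z0 Z1 : 'I_r -> 'I_s -> 'I_iota -> 'I_6 -> V -> R) :
  0 < tau -> 0 < dx -> 0 < dy -> 0 < dz ->
  (* symplecticity conditions on the coefficients *)
  (forall k j, b k * b j - b k * a k j - b j * a j k = 0) ->
  (forall p q, bb p * bb q - bb p * ab p q - bb q * ab q p = 0) ->
  (forall m n, bt m * bt n - bt m * at_ m n - bt n * at_ n m = 0) ->
  (forall l v, bh l * bh v - bh l * ah l v - bh v * ah v l = 0) ->
  (* all quantities are differentiable functions on phase space *)
  (forall m p l k c th,
     [/\ differentiable (Y m p l k c) th, differentiable (dtY m p l k c) th,
         differentiable (dxY m p l k c) th, differentiable (dyY m p l k c) th
       & differentiable (dzY m p l k c) th]) ->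
  (forall m p l c th, differentiable (E0 m p l c) th /\ differentiable (E1 m p l c) th) ->
  (forall k p l c th, differentiable (X0 k p l c) th /\ differentiable (X1 k p l c) th) ->
  (forall k m l c th, differentiable (W0 k m l c) th /\ differentiable (W1 k m l c) th) ->
  (forall k m p c th, differentiable (Z0 k m p c) th /\ differentiable (Z1 k m p c) th) ->
  (* the method, at every point of phase space *)
  (forall m p l k c th,
     Y m p l k c th = E0 m p l c th + tau * \sum_(j < r) a k j * dtY m p l j c th) ->
  (forall m p l c th,
     E1 m p l c th = E0 m p l c th + tau * \sum_(k < r) b k * dtY m p l k c th) ->
  (forall m p l k c th,
     Y m p l k c th = X0 k p l c th + dx * \sum_(n < s) at_ m n * dxY n p l k c th) ->
  (forall k p l c th,
     X1 k p l c th = X0 k p l c th + dx * \sum_(m < s) bt m * dxY m p l k c th) ->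
  (forall m p l k c th,
     Y m p l k c th = W0 k m l c th + dy * \sum_(q < iota) ab p q * dyY m q l k c th) ->
  (forall k m l c th,
     W1 k m l c th = W0 k m l c th + dy * \sum_(p < iota) bb p * dyY m p l k c th) ->
  (forall m p l k c th,
     Y m p l k c th = Z0 k m p c th + dz * \sum_(v < sigma) ah l v * dzY m p v k c th) ->
  (forall k m p c th,
     Z1 k m p c th = Z0 k m p c th + dz * \sum_(u < sigma) bh u * dzY m p u k c th) ->
  (forall m p l k c th,
     tau * (\sum_(d < 6) Kmx c d * dtY m p l k d th)
     + tau * (\sum_(d < 6) (L1mx c d * dxY m p l k d th + L2mx c d * dyY m p l k d th
                            + L3mx c d * dzY m p l k d th))
     = gradS lam (fun d => Y m p l k d th) c * dW m p l) ->
  (* conclusion: discrete stochastic multi-symplectic conservation law *)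
  let omega (E : 'I_s -> 'I_iota -> 'I_sigma -> 'I_6 -> V -> R) th xi eta :=
    1 / 2%:R * \sum_(m < s) \sum_(p < iota) \sum_(l < sigma)
      bt m * bb p * bh l * wedgeM Kmx (E m p l) th xi eta in
  let kappa1 (E : 'I_r -> 'I_iota -> 'I_sigma -> 'I_6 -> V -> R) th xi eta :=
    1 / 2%:R * \sum_(k < r) \sum_(p < iota) \sum_(l < sigma)
      b k * bb p * bh l * wedgeM L1mx (E k p l) th xi eta in
  let kappa2 (E : 'I_r -> 'I_s -> 'I_sigma -> 'I_6 -> V -> R) th xi eta :=
    1 / 2%:R * \sum_(k < r) \sum_(m < s) \sum_(l < sigma)
      b k * bt m * bh l * wedgeM L2mx (E k m l) th xi eta in
  let kappa3 (E : 'I_r -> 'I_s -> 'I_iota -> 'I_6 -> V -> R) th xi eta :=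
    1 / 2%:R * \sum_(k < r) \sum_(m < s) \sum_(p < iota)
      b k * bt m * bb p * wedgeM L3mx (E k m p) th xi eta in
  forall th xi eta : V,
    (omega E1 th xi eta - omega E0 th xi eta) / tau
    + (kappa1 X1 th xi eta - kappa1 X0 th xi eta) / dx
    + (kappa2 W1 th xi eta - kappa2 W0 th xi eta) / dy
    + (kappa3 Z1 th xi eta - kappa3 Z0 th xi eta) / dz = 0.
Proof.
move=> tp xp yp zp ct cy cx cz hdY hdE hdX hdW hdZ hYt hE1 hYx hX1 hYy hW1 hYz hZ1 hEq.
move=> omega kappa1 kappa2 kappa3 th xi eta.
have tnz : tau != 0 by rewrite gt_eqF.
have xnz : dx != 0 by rewrite gt_eqF.
have ynz : dy != 0 by rewrite gt_eqF.
have znz : dz != 0 by rewrite gt_eqF.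
pose ev (z : bool) := if z then xi else eta.
have dY : forall m p l k c, differentiable (Y m p l k c) th by move=> m p l k c; case: (hdY m p l k c th).
have dYt : forall m p l k c, differentiable (dtY m p l k c) th by move=> m p l k c; case: (hdY m p l k c th).
have dYx : forall m p l k c, differentiable (dxY m p l k c) th by move=> m p l k c; case: (hdY m p l k c th).
have dYy : forall m p l k c, differentiable (dyY m p l k c) th by move=> m p l k c; case: (hdY m p l k c th).
have dYz : forall m p l k c, differentiable (dzY m p l k c) th by move=> m p l k c; case: (hdY m p l k c th).
have hYt' : forall z m p l k c, 'd (Y m p l k c) th (ev z) =
   'd (E0 m p l c) th (ev z) + tau * \sum_(j < r) a k j * 'd (dtY m p l j c) th (ev z).
  move=> z m p l k c.
  have [_ H] : Dv (Y m p l k c) th (fun v => 'd (E0 m p l c) th v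
        + tau * \sum_(j < r) a k j * 'd (dtY m p l j c) th v).
    apply: Dv_ext (hYt m p l k c) _; apply: Dv_add.
      by apply: Dv_base; case: (hdE m p l c th).
    by apply: Dv_scal; apply: Dv_sum => j; apply: Dv_scal; apply: Dv_base.
  exact: H.
have hE1' : forall z m p l c, 'd (E1 m p l c) th (ev z) =
   'd (E0 m p l c) th (ev z) + tau * \sum_(k < r) b k * 'd (dtY m p l k c) th (ev z).
  move=> z m p l c.
  have [_ H] : Dv (E1 m p l c) th (fun v => 'd (E0 m p l c) th v
        + tau * \sum_(k < r) b k * 'd (dtY m p l k c) th v).
    apply: Dv_ext (hE1 m p l c) _; apply: Dv_add.
      by apply: Dv_base; case: (hdE m p l c th).
    by apply: Dv_scal; apply: Dv_sum => j; apply: Dv_scal; apply: Dv_base.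
  exact: H.
have hYx' : forall z m p l k c, 'd (Y m p l k c) th (ev z) =
   'd (X0 k p l c) th (ev z) + dx * \sum_(n < s) at_ m n * 'd (dxY n p l k c) th (ev z).
  move=> z m p l k c.
  have [_ H] : Dv (Y m p l k c) th (fun v => 'd (X0 k p l c) th v
        + dx * \sum_(n < s) at_ m n * 'd (dxY n p l k c) th v).
    apply: Dv_ext (hYx m p l k c) _; apply: Dv_add.
      by apply: Dv_base; case: (hdX k p l c th).
    by apply: Dv_scal; apply: Dv_sum => j; apply: Dv_scal; apply: Dv_base.
  exact: H.
have hX1' : forall z k p l c, 'd (X1 k p l c) th (ev z) =
   'd (X0 k p l c) th (ev z) + dx * \sum_(m < s) bt m * 'd (dxY m p l k c) th (ev z).
  move=> z k p l c.
  have [_ H] : Dv (X1 k p l c) th (fun v => 'd (X0 k p l c) th v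
        + dx * \sum_(m < s) bt m * 'd (dxY m p l k c) th v).
    apply: Dv_ext (hX1 k p l c) _; apply: Dv_add.
      by apply: Dv_base; case: (hdX k p l c th).
    by apply: Dv_scal; apply: Dv_sum => j; apply: Dv_scal; apply: Dv_base.
  exact: H.
have hYy' : forall z m p l k c, 'd (Y m p l k c) th (ev z) =
   'd (W0 k m l c) th (ev z) + dy * \sum_(q < iota) ab p q * 'd (dyY m q l k c) th (ev z).
  move=> z m p l k c.
  have [_ H] : Dv (Y m p l k c) th (fun v => 'd (W0 k m l c) th v
        + dy * \sum_(q < iota) ab p q * 'd (dyY m q l k c) th v).
    apply: Dv_ext (hYy m p l k c) _; apply: Dv_add.
      by apply: Dv_base; case: (hdW k m l c th).
    by apply: Dv_scal; apply: Dv_sum => j; apply: Dv_scal; apply: Dv_base.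
  exact: H.
have hW1' : forall z k m l c, 'd (W1 k m l c) th (ev z) =
   'd (W0 k m l c) th (ev z) + dy * \sum_(p < iota) bb p * 'd (dyY m p l k c) th (ev z).
  move=> z k m l c.
  have [_ H] : Dv (W1 k m l c) th (fun v => 'd (W0 k m l c) th v
        + dy * \sum_(p < iota) bb p * 'd (dyY m p l k c) th v).
    apply: Dv_ext (hW1 k m l c) _; apply: Dv_add.
      by apply: Dv_base; case: (hdW k m l c th).
    by apply: Dv_scal; apply: Dv_sum => j; apply: Dv_scal; apply: Dv_base.
  exact: H.
have hYz' : forall z m p l k c, 'd (Y m p l k c) th (ev z) =
   'd (Z0 k m p c) th (ev z) + dz * \sum_(v < sigma) ah l v * 'd (dzY m p v k c) th (ev z).
  move=> z m p l k c.
  have [_ H] : Dv (Y m p l k c) th (fun w => 'd (Z0 k m p c) th w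
        + dz * \sum_(v < sigma) ah l v * 'd (dzY m p v k c) th w).
    apply: Dv_ext (hYz m p l k c) _; apply: Dv_add.
      by apply: Dv_base; case: (hdZ k m p c th).
    by apply: Dv_scal; apply: Dv_sum => j; apply: Dv_scal; apply: Dv_base.
  exact: H.
have hZ1' : forall z k m p c, 'd (Z1 k m p c) th (ev z) =
   'd (Z0 k m p c) th (ev z) + dz * \sum_(u < sigma) bh u * 'd (dzY m p u k c) th (ev z).
  move=> z k m p c.
  have [_ H] : Dv (Z1 k m p c) th (fun w => 'd (Z0 k m p c) th w
        + dz * \sum_(u < sigma) bh u * 'd (dzY m p u k c) th w).
    apply: Dv_ext (hZ1 k m p c) _; apply: Dv_add.
      by apply: Dv_base; case: (hdZ k m p c th).
    by apply: Dv_scal; apply: Dv_sum => j; apply: Dv_scal; apply: Dv_base.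
  exact: H.
have hEq' : forall z m p l k c,
     tau * (\sum_(d < 6) Kmx c d * 'd (dtY m p l k d) th (ev z))
     + tau * (\sum_(d < 6) (L1mx c d * 'd (dxY m p l k d) th (ev z)
          + L2mx c d * 'd (dyY m p l k d) th (ev z)
          + L3mx c d * 'd (dzY m p l k d) th (ev z)))
     = lam * 'd (Y m p l k c) th (ev z) * dW m p l.
  move=> z m p l k c.
  have [_ H1] : Dv (fun t => tau * (\sum_(d < 6) Kmx c d * dtY m p l k d t)
     + tau * (\sum_(d < 6) (L1mx c d * dxY m p l k d t + L2mx c d * dyY m p l k d t
                            + L3mx c d * dzY m p l k d t))) th
     (fun v => tau * (\sum_(d < 6) Kmx c d * 'd (dtY m p l k d) th v)
     + tau * (\sum_(d < 6) (L1mx c d * 'd (dxY m p l k d) th v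
          + L2mx c d * 'd (dyY m p l k d) th v
          + L3mx c d * 'd (dzY m p l k d) th v))).
    apply: Dv_add; apply: Dv_scal; apply: Dv_sum => d.
      by apply: Dv_scal; apply: Dv_base.
    by apply: Dv_add; [apply: Dv_add|]; apply: Dv_scal; apply: Dv_base.
  have [_ H2] : Dv (fun t => lam * Y m p l k c t * dW m p l) th
     (fun v => lam * 'd (Y m p l k c) th v * dW m p l).
    by apply: Dv_scar; apply: Dv_scal; apply: Dv_base.
  have E : (fun t => tau * (\sum_(d < 6) Kmx c d * dtY m p l k d t)
     + tau * (\sum_(d < 6) (L1mx c d * dxY m p l k d t + L2mx c d * dyY m p l k d t
                            + L3mx c d * dzY m p l k d t)))
     = (fun t => lam * Y m p l k c t * dW m p l).
    by apply: functional_extensionality => t; rewrite hEq.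
  rewrite E in H1.
  exact: (etrans (esym (H1 (ev z))) (H2 (ev z))).
exact: (@core R Kmx L1mx L2mx L3mx r s iota sigma lam tau dx dy dz a b at_ bt ab bb ah bh dW
  (fun z m p l k c => 'd (Y m p l k c) th (ev z))
  (fun z m p l k c => 'd (dtY m p l k c) th (ev z))
  (fun z m p l k c => 'd (dxY m p l k c) th (ev z))
  (fun z m p l k c => 'd (dyY m p l k c) th (ev z))
  (fun z m p l k c => 'd (dzY m p l k c) th (ev z))
  (fun z m p l c => 'd (E0 m p l c) th (ev z))
  (fun z m p l c => 'd (E1 m p l c) th (ev z))
  (fun z k p l c => 'd (X0 k p l c) th (ev z))
  (fun z k p l c => 'd (X1 k p l c) th (ev z))
  (fun z k m l c => 'd (W0 k m l c) th (ev z))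
  (fun z k m l c => 'd (W1 k m l c) th (ev z))
  (fun z k m p c => 'd (Z0 k m p c) th (ev z))
  (fun z k m p c => 'd (Z1 k m p c) th (ev z))
  (@skewK R) (@skewL1 R) (@skewL2 R) (@skewL3 R) tnz xnz ynz znz ct cy cx cz
  hYt' hE1' hYx' hX1' hYy' hW1' hYz' hZ1' hEq').
Qed.
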